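(* Let $(X,\rho)$ be a metric space, $A,B$ nonempty subsets of $X$, and let $F:A\times A\to B$, $G:B\times B\to A$ be such that there exist $\alpha,\beta\ge0$ with $\alpha+\beta<1$ and $$\rho(F(x,x'),G(y,y'))\le\alpha\rho(x,y)+\beta\rho(x',y')+(1-(\alpha+\beta))\,\mathrm{dist}(A,B)$$ for all $x,x'\in A$ and $y,y'\in B$. For $(x_0,y_0)\in A\times A$ define recursively, for $n\ge0$, $$x_{2n+1}=F(x_{2n},y_{2n}),\ y_{2n+1}=F(y_{2n},x_{2n}),\qquad x_{2n+2}=G(x_{2n+1},y_{2n+1}),\ y_{2n+2}=G(y_{2n+1},x_{2n+1}).$$ Then the sequences $\{x_n\}_{n=0}^\infty$ and $\{y_n\}_{n=0}^\infty$ are bounded.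
   Context: $\mathrm{dist}(A,B)=\inf\{\rho(a,b):a\in A,\ b\in B\}$. *)

(* Defs.v *)
From Stdlib Require Import Reals.
From Coquelicot Require Import Coquelicot.
Open Scope R_scope.

Definition is_metric {X : Type} (rho : X -> X -> R) : Prop :=
  (forall x y, 0 <= rho x y) /\
  (forall x y, rho x y = 0 <-> x = y) /\
  (forall x y, rho x y = rho y x) /\
  (forall x y z, rho x z <= rho x y + rho y z).

Definition set_dist {X : Type} (rho : X -> X -> R) (A B : X -> Prop) : R :=
  real (Glb_Rbar (fun r => exists a b, A a /\ B b /\ r = rho a b)).

Fixpoint coupled_iter {X : Type} (F G : X -> X -> X) (x0 y0 : X) (n : nat)
  : X * X :=
  match n with
  | O => (x0, y0)
  | S k =>
      let p := coupled_iter F G x0 y0 k in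
      if Nat.even k then (F (fst p) (snd p), F (snd p) (fst p))
      else (G (fst p) (snd p), G (snd p) (fst p))
  end.

Definition bounded_seq {X : Type} (rho : X -> X -> R) (u : nat -> X) : Prop :=
  exists M : R, forall n m : nat, rho (u n) (u m) <= M.

(* Main.v *)
Require Import Defs.
From Stdlib Require Import Reals Lra Lia Psatz.
Open Scope R_scope.

Lemma even2 (n : nat) : Nat.even (2*n)%nat = true.
Proof. induction n as [|n IH]; [reflexivity|].
  replace (2*S n)%nat with (S (S (2*n)%nat)) by lia. simpl. exact IH. Qed.

Lemma odd2 (n : nat) : Nat.even (S (2*n)%nat) = false.
Proof. induction n as [|n IH]; [reflexivity|].
  replace (S (2*S n)%nat)%nat with (S (S (S (2*n)%nat))) by lia. simpl. exact IH. Qed.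

Lemma ci_S {X : Type} (F G : X -> X -> X) x0 y0 k :
  coupled_iter F G x0 y0 (S k) =
  (if Nat.even k then (F (fst (coupled_iter F G x0 y0 k)) (snd (coupled_iter F G x0 y0 k)),
                       F (snd (coupled_iter F G x0 y0 k)) (fst (coupled_iter F G x0 y0 k)))
   else (G (fst (coupled_iter F G x0 y0 k)) (snd (coupled_iter F G x0 y0 k)),
         G (snd (coupled_iter F G x0 y0 k)) (fst (coupled_iter F G x0 y0 k)))).
Proof. reflexivity. Qed.

Theorem lemma34 (X : Type) (rho : X -> X -> R) (Hrho : is_metric rho)
  (A B : X -> Prop) (HA : exists a, A a) (HB : exists b, B b)
  (F G : X -> X -> X)
  (HF : forall x x', A x -> A x' -> B (F x x'))
  (HG : forall y y', B y -> B y' -> A (G y y'))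
  (alpha beta : R) (Ha : 0 <= alpha) (Hb : 0 <= beta) (Hab : alpha + beta < 1)
  (Hcontr : forall x x' y y', A x -> A x' -> B y -> B y' ->
     rho (F x x') (G y y') <=
       alpha * rho x y + beta * rho x' y' + (1 - (alpha + beta)) * set_dist rho A B)
  (x0 y0 : X) (Hx0 : A x0) (Hy0 : A y0) :
  bounded_seq rho (fun n => fst (coupled_iter F G x0 y0 n)) /\
  bounded_seq rho (fun n => snd (coupled_iter F G x0 y0 n)).
Proof.
  destruct Hrho as [Hpos [_ [Hsym Htri]]].
  set (z := coupled_iter F G x0 y0).
  set (xs := fun n => fst (z n)). set (ys := fun n => snd (z n)).
  assert (Hodd : forall n, xs (S (2*n)%nat) = F (xs (2*n)%nat) (ys (2*n)%nat) /\
                           ys (S (2*n)%nat) = F (ys (2*n)%nat) (xs (2*n)%nat)).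
  { intro n. unfold xs, ys, z. rewrite ci_S, even2. simpl. auto. }
  assert (Hev : forall n, xs (S (S (2*n)%nat)) = G (xs (S (2*n)%nat)) (ys (S (2*n)%nat)) /\
                           ys (S (S (2*n)%nat)) = G (ys (S (2*n)%nat)) (xs (S (2*n)%nat))).
  { intro n. unfold xs, ys, z. rewrite ci_S, odd2. simpl. auto. }
  assert (Hmem : forall n, A (xs (2*n)%nat) /\ A (ys (2*n)%nat) /\ B (xs (S (2*n)%nat)) /\ B (ys (S (2*n)%nat))).
  { induction n as [|n IH].
    - assert (E0 : xs (2*0)%nat = x0) by reflexivity.
      assert (E1 : ys (2*0)%nat = y0) by reflexivity.
      destruct (Hodd 0%nat) as [O1 O2]. rewrite O1, O2, E0, E1. auto.
    - destruct IH as [H1 [H2 [H3 H4]]].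
      replace (2*S n)%nat with (S (S (2*n)%nat)) by lia.
      destruct (Hev n) as [E1 E2]. rewrite E1, E2.
      assert (A1 : A (G (xs (S (2*n)%nat)) (ys (S (2*n)%nat)))) by auto.
      assert (A2 : A (G (ys (S (2*n)%nat)) (xs (S (2*n)%nat)))) by auto.
      replace (S (S (S (2*n)%nat))) with (S (2*S n)%nat) by lia.
      destruct (Hodd (S n)) as [O1 O2]. rewrite O1, O2.
      replace (2*S n)%nat with (S (S (2*n)%nat)) by lia.
      rewrite E1, E2. auto. }
  set (k := alpha + beta).
  set (e := Rabs ((1 - (alpha + beta)) * set_dist rho A B)).
  assert (He : 0 <= e) by apply Rabs_pos.
  assert (Hce : (1 - (alpha + beta)) * set_dist rho A B <= e) by apply Rle_abs.
  assert (Hc : forall x x' y y', A x -> A x' -> B y -> B y' ->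
     rho (F x x') (G y y') <= alpha * rho x y + beta * rho x' y' + e).
  { intros. specialize (Hcontr x x' y y' H H0 H1 H2). lra. }
  set (u := fun j => rho (xs j) (xs 1%nat) + rho (ys j) (ys 1%nat)).
  set (v := fun j => rho (xs j) (xs 2%nat) + rho (ys j) (ys 2%nat)).
  destruct (Hodd 0%nat) as [X1 Y1]. destruct (Hev 0%nat) as [X2 Y2].
  simpl in X1, Y1, X2, Y2.
  destruct (Hmem 0%nat) as [_ [_ [B1 B2]]]. simpl in B1, B2.
  assert (R1 : forall n, v (S (2*n)%nat) <= k * u (2*n)%nat + 2*e).
  { intro n. unfold v, u. destruct (Hodd n) as [O1 O2]. rewrite O1, O2, X2, Y2.
    destruct (Hmem n) as [H1 [H2 _]].
    pose proof (Hc _ _ _ _ H1 H2 B1 B2). pose proof (Hc _ _ _ _ H2 H1 B2 B1).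
    unfold k. rewrite <- X2, <- Y2. rewrite <- X2, <- Y2 in *. lra. }
  set (K0 := rho (xs 2%nat) x0 + rho (ys 2%nat) y0).
  assert (R2 : forall n, u (S (S (2*n)%nat)) <= k * (v (S (2*n)%nat) + K0) + 2*e).
  { intro n. unfold u, v, K0. destruct (Hev n) as [E1 E2].
    set (a := xs (S (2*n)%nat)). set (b := ys (S (2*n)%nat)).
    destruct (Hmem n) as [_ [_ [H3 H4]]]. fold a b in H3, H4.
    assert (Q1 : rho (xs (S (S (2*n)%nat))) (xs 1%nat) = rho (F x0 y0) (G a b))
      by (rewrite E1, X1; apply Hsym).
    assert (Q2 : rho (ys (S (S (2*n)%nat))) (ys 1%nat) = rho (F y0 x0) (G b a))
      by (rewrite E2, Y1; apply Hsym).
    rewrite Q1, Q2.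
    pose proof (Hc _ _ _ _ Hx0 Hy0 H3 H4) as C1. pose proof (Hc _ _ _ _ Hy0 Hx0 H4 H3) as C2.
    pose proof (Htri x0 (xs 2%nat) a) as T1.
    pose proof (Htri y0 (ys 2%nat) b) as T2.
    rewrite (Hsym x0 (xs 2%nat)), (Hsym (xs 2%nat) a) in T1.
    rewrite (Hsym y0 (ys 2%nat)), (Hsym (ys 2%nat) b) in T2.
    unfold k.
    assert (alpha * rho x0 a + beta * rho y0 b + (beta * rho x0 b + alpha * rho y0 b) >= 0 \/ True) by auto.
    assert (alpha * (rho x0 a + rho y0 b) <= alpha * (rho a (xs 2%nat) + rho b (ys 2%nat) + (rho (xs 2%nat) x0 + rho (ys 2%nat) y0))) by nra.
    assert (beta * (rho x0 a + rho y0 b) <= beta * (rho a (xs 2%nat) + rho b (ys 2%nat) + (rho (xs 2%nat) x0 + rho (ys 2%nat) y0))) by nra.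
    lra. }
  assert (Hk0 : 0 <= k) by (unfold k; lra).
  assert (Hk1 : k < 1) by (unfold k; lra).
  assert (HK0 : 0 <= K0) by (unfold K0; pose proof (Hpos (xs 2%nat) x0); pose proof (Hpos (ys 2%nat) y0); lra).
  assert (Hu0 : forall j, 0 <= u j) by (intro j; unfold u; pose proof (Hpos (xs j) (xs 1%nat)); pose proof (Hpos (ys j) (ys 1%nat)); lra).
  set (C := 4*e + K0).
  assert (R3 : forall n, u (2*S n)%nat <= k * u (2*n)%nat + C).
  { intro n. replace (2*S n)%nat with (S (S (2*n)%nat)) by lia.
    pose proof (R2 n). pose proof (R1 n). pose proof (Hu0 (2*n)%nat).
    assert (0 <= k * ((1 - k) * u (2*n)%nat)) by (apply Rmult_le_pos; [lra| apply Rmult_le_pos; lra]).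
    assert (0 <= k * K0) by (apply Rmult_le_pos; lra).
    assert (0 <= k * e) by (apply Rmult_le_pos; lra).
    unfold C. nra. }
  set (M := (u 0%nat + C) / (1 - k)).
  assert (HM : (1 - k) * M = u 0%nat + C) by (unfold M; field; lra).
  assert (HC : 0 <= C) by (unfold C; lra).
  assert (Hub : forall n, u (2*n)%nat <= M).
  { induction n as [|n IH].
    - simpl. pose proof (Hu0 0%nat).
      assert (0 <= k * u 0%nat) by (apply Rmult_le_pos; lra).
      assert ((1-k) * u 0%nat <= (1-k) * M) by lra.
      apply Rmult_le_reg_l in H1; lra.
    - pose proof (R3 n). pose proof (Hu0 0%nat).
      assert (k * u (2*n)%nat <= k * M) by (apply Rmult_le_compat_l; lra).
      nra. }
  assert (HM0 : 0 <= M) by (pose proof (Hub 0%nat) as Hq; simpl in Hq; pose proof (Hu0 0%nat); lra).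
  set (N := M + 2*e + rho (xs 2%nat) (xs 1%nat) + rho (ys 2%nat) (ys 1%nat)).
  assert (Hbd : forall n, rho (xs n) (xs 1%nat) <= N /\ rho (ys n) (ys 1%nat) <= N).
  { intro n. pose proof (Hpos (xs 2%nat) (xs 1%nat)). pose proof (Hpos (ys 2%nat) (ys 1%nat)).
    destruct (Nat.Even_or_Odd n) as [[m Hm] | [m Hm]]; subst n.
    - pose proof (Hub m). unfold u in H1.
      pose proof (Hpos (xs (2*m)%nat) (xs 1%nat)). pose proof (Hpos (ys (2*m)%nat) (ys 1%nat)).
      unfold N. lra.
    - replace (2*m+1)%nat with (S (2*m)%nat) by lia.
      pose proof (R1 m). pose proof (Hub m). unfold v in H1.
      pose proof (Htri (xs (S (2*m)%nat)) (xs 2%nat) (xs 1%nat)).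
      pose proof (Htri (ys (S (2*m)%nat)) (ys 2%nat) (ys 1%nat)).
      pose proof (Hpos (xs (S (2*m)%nat)) (xs 2%nat)). pose proof (Hpos (ys (S (2*m)%nat)) (ys 2%nat)).
      assert (k * u (2*m)%nat <= M) by nra.
      unfold N. lra. }
  split; exists (2*N); intros n m;
    destruct (Hbd n) as [P1 P2]; destruct (Hbd m) as [Q1 Q2].
  - pose proof (Htri (xs n) (xs 1%nat) (xs m)). rewrite (Hsym (xs 1%nat)) in H.
    fold z xs. lra.
  - pose proof (Htri (ys n) (ys 1%nat) (ys m)). rewrite (Hsym (ys 1%nat)) in H.
    fold z ys. lra.
Qed.
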